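(* The map $\mathbf{x}\mapsto(\mathbf{s},h)$, defined on $\mathbb{R}^3\setminus\mathbb{I}$, is injective, where $\mathbf{s}$ is the dispersed projection of $\mathbf{x}$ onto $\mathcal{M}$ and $h$ is its signed height: $h=\|\mathbf{x}-\mathbf{s}\|$ if $\mathbf{x}$ is outside the region enclosed by $\mathcal{M}$ and $h=-\|\mathbf{x}-\mathbf{s}\|$ if $\mathbf{x}$ is inside. That is, if $\mathbf{x}_1,\mathbf{x}_2\in\mathbb{R}^3\setminus\mathbb{I}$ have equal $(\mathbf{s},h)$, then $\mathbf{x}_1=\mathbf{x}_2$.
   Context: Let $\mathcal{M}$ be a triangle mesh in $\mathbb{R}^3$ that is watertight (closed, without self-intersections) and has no faces of zero area. Each face $T=(\mathbf{v}_1,\mathbf{v}_2,\mathbf{v}_3)$ has an outward unit face normal $\mathbf{n}_T$; each vertex $\mathbf{v}$ has a unit vertex normal $\mathbf{n}_{\mathbf{v}}$, and for every face $T$ and every vertex $\mathbf{v}$ of $T$, $\langle \mathbf{n}_{\mathbf{v}},\mathbf{n}_T\rangle>0$. Vertex normal alignment of a face $T$ with orientation $\sigma\in\{+1,-1\}$: put $\mathbf{m}_T=\sigma\mathbf{n}_T$; for each $i\in\{1,2,3\}$ let $j,k$ be the other two indices, $\mathbf{e}_1=\mathbf{v}_j-\mathbf{v}_i$, $\mathbf{e}_2=\mathbf{v}_k-\mathbf{v}_i$, $\mathbf{m}_i=\sigma\mathbf{n}_{\mathbf{v}_i}$, write the in-plane part $\mathbf{m}_i-\langle\mathbf{m}_i,\mathbf{m}_T\rangle\mathbf{m}_T=c_1\mathbf{e}_1+c_2\mathbf{e}_2$,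 and define the aligned normal $\hat{\mathbf{n}}^{T,\sigma}_i=(\mathbf{m}_i-\max(0,c_1)\mathbf{e}_1-\max(0,c_2)\mathbf{e}_2)/\|\mathbf{m}_i-\max(0,c_1)\mathbf{e}_1-\max(0,c_2)\mathbf{e}_2\|$. (Aligned normals depend on the face $T$, not only on the vertex.) Barycentric interpolated projection onto $T$ with orientation $\sigma$: for $\mathbf{x}$ with $l:=\langle\mathbf{x}-\mathbf{v}_1,\sigma\mathbf{n}_T\rangle\ge 0$, set $\mathbf{v}_i'=\mathbf{v}_i+\big(l/\langle\hat{\mathbf{n}}^{T,\sigma}_i,\sigma\mathbf{n}_T\rangle\big)\hat{\mathbf{n}}^{T,\sigma}_i$, forming the parallel triangle $T'=(\mathbf{v}_1',\mathbf{v}_2',\mathbf{v}_3')$ in the plane through $\mathbf{x}$ parallel to $T$. If $\mathbf{x}\in T'$, i.e. $\mathbf{x}=\sum_i\alpha_i\mathbf{v}_i'$ with $\alpha_i\ge0$, $\sum_i\alpha_i=1$, the projection is $\mathbf{s}_T=\sum_i\alpha_i\mathbf{v}_i$. Dispersed projection of $\mathbf{x}$ (with $\sigma=+1$ if $\mathbf{x}$ is outside the region enclosed by $\mathcal{M}$ and $\sigma=-1$ if inside): (1) compute the nearest point $\tilde{\mathbf{s}}$ of $\mathcal{M}$ to $\mathbf{x}$; (2) let $\mathcal{T}$ be the set of faces containing $\tilde{\mathbf{s}}$; (3) apply vertex normal alignment with orientation $\sigma$ to each $T\in\mathcal{T}$; (4) discard those $T$ with $\mathbf{x}\notin T'$;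 (5) compute $\mathbf{s}_T$ for the remaining $T$; (6) let $\mathbf{s}$ be the $\mathbf{s}_T$ nearest to $\mathbf{x}$. It is assumed that for every $\mathbf{x}\in\mathbb{R}^3$ at least one face survives step (4), so $\mathbf{s}$ is defined. Exceptional set: for a face $T$, orientation $\sigma$, and $\mathbf{a}^{T,\sigma}_i=\hat{\mathbf{n}}^{T,\sigma}_i/\langle\hat{\mathbf{n}}^{T,\sigma}_i,\sigma\mathbf{n}_T\rangle$, let $\mathbb{I}$ be the union over all faces $T$, both $\sigma$, and all pairs of distinct vertices $\mathbf{v}_i,\mathbf{v}_j$ of $T$ of the bilinear surfaces $\{(1-u)\mathbf{v}_i+u\mathbf{v}_j+t((1-u)\mathbf{a}^{T,\sigma}_i+u\mathbf{a}^{T,\sigma}_j): u\in[0,1],t\ge0\}$ (a set of Lebesgue measure zero). For $\mathbf{x}\notin\mathbb{I}$, the dispersed projection $\mathbf{s}$ lies in the relative interior of a face. *)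

(* Defs.v *)
From HB Require Import structures.
From mathcomp Require Import all_boot all_order all_algebra.
From mathcomp Require Import all_classical all_reals all_analysis.
Set Implicit Arguments. Unset Strict Implicit. Unset Printing Implicit Defensive.
Import Order.TTheory GRing.Theory Num.Theory.
Import numFieldNormedType.Exports.
Local Open Scope ring_scope.
Local Open Scope classical_set_scope.

Section MeshDefs.
Context {R : realType}.
Local Notation vec := 'rV[R]_3.
(* an (oriented) triangular face (v1, v2, v3) *)
Local Notation face := (vec * vec * vec)%type.

Definition vec3 (a b c : R) : vec := \row_(i < 3) nth 0 [:: a; b; c] i.
Definition coord (v : vec) (k : nat) : R := v ord0 (inord k).
Definition dot (u v : vec) : R := \sum_(i < 3) u ord0 i * v ord0 i.
Definition enorm (u : vec) : R := Num.sqrt (dot u u).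
Definition cross (u v : vec) : vec :=
  vec3 (coord u 1 * coord v 2 - coord u 2 * coord v 1)
       (coord u 2 * coord v 0 - coord u 0 * coord v 2)
       (coord u 0 * coord v 1 - coord u 1 * coord v 0).

Definition fv1 (T : face) : vec := T.1.1.
Definition fv2 (T : face) : vec := T.1.2.
Definition fv3 (T : face) : vec := T.2.
Definition verts (T : face) : seq vec := [:: fv1 T; fv2 T; fv3 T].
Definition vtx (T : face) (i : nat) : vec := nth 0 (verts T) i.

Definition face_normal (T : face) : vec :=
  let c := cross (fv2 T - fv1 T) (fv3 T - fv1 T) in (enorm c)^-1 *: c.

Definition bary (a1 a2 a3 : R) (p1 p2 p3 : vec) : vec :=
  a1 *: p1 + a2 *: p2 + a3 *: p3.

Definition in_tri (p1 p2 p3 x : vec) : Prop :=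
  exists a1 a2 a3 : R, [/\ 0 <= a1, 0 <= a2, 0 <= a3, a1 + a2 + a3 = 1
                       & x = bary a1 a2 a3 p1 p2 p3].

Definition in_face (T : face) (x : vec) : Prop := in_tri (fv1 T) (fv2 T) (fv3 T) x.

Definition conv_seq (s : seq vec) (x : vec) : Prop :=
  exists a : vec -> R, [/\ forall p, p \in s -> 0 <= a p,
                           \sum_(p <- undup s) a p = 1
                         & x = \sum_(p <- undup s) a p *: p].

Definition on_mesh (M : seq face) (x : vec) : Prop :=
  exists T, T \in M /\ in_face T x.

Definition no_zero_area_face (M : seq face) : Prop :=
  forall T, T \in M -> cross (fv2 T - fv1 T) (fv3 T - fv1 T) != 0.

Definition closed_mesh (M : seq face) : Prop :=
  forall T, T \in M -> forall a b, a \in verts T -> b \in verts T -> a != b ->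
    count (fun T' : face => (a \in verts T') && (b \in verts T')) M = 2%N.

Definition face0 : face := (0, 0, 0).

(* no self-intersections: two distinct faces of the list are different
   triangles and meet exactly in the convex hull of their common vertices
   (empty, a common vertex, or a common edge) *)
Definition no_self_intersection (M : seq face) : Prop :=
  forall i j : nat, (i < size M)%N -> (j < size M)%N -> i != j ->
    let T1 := nth face0 M i in let T2 := nth face0 M j in
    let com := [seq p <- verts T1 | p \in verts T2] in
    (size (undup com) < 3)%N /\
    forall x, (in_face T1 x /\ in_face T2 x) <-> conv_seq com x.

(* x can be joined to points arbitrarily far away by a continuous path
   avoiding M, i.e. x lies in the unbounded component of R^3 \ M *)
Definition escapes (M : seq face) (x : vec) : Prop :=
  forall B : R, exists (y : vec) (g : R -> vec),
    [/\ B < enorm y, {within `[0, 1], continuous g}, g 0 = x, g 1 = y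
      & forall t : R, 0 <= t <= 1 -> ~ on_mesh M (g t)].

(* region enclosed by M: the bounded complementary components *)
Definition inside (M : seq face) (x : vec) : Prop := ~ on_mesh M x /\ ~ escapes M x.
Definition outside (M : seq face) (x : vec) : Prop := ~ on_mesh M x /\ escapes M x.

Definition outward (M : seq face) : Prop :=
  forall T, T \in M -> forall a1 a2 a3 : R, 0 < a1 -> 0 < a2 -> 0 < a3 ->
    a1 + a2 + a3 = 1 ->
    let p := bary a1 a2 a3 (fv1 T) (fv2 T) (fv3 T) in
    exists e0 : R, 0 < e0 /\ forall e : R, 0 < e -> e < e0 ->
      outside M (p + e *: face_normal T) /\ inside M (p - e *: face_normal T).

Definition vnormals_ok (M : seq face) (nv : vec -> vec) : Prop :=
  forall T, T \in M -> forall v, v \in verts T ->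
    enorm (nv v) = 1 /\ 0 < dot (nv v) (face_normal T).

(* orientation sigma: +1 outside (and on M), -1 inside *)
Definition sgn (M : seq face) (x : vec) : R := if `[< inside M x >] then -1 else 1.

(* aligned normal at vertex vi of face T (vj, vk the two other vertices);
   (c1, c2) are the (unique, by Cramer's rule) coordinates of the in-plane
   part p in the basis (e1, e2) *)
Definition aligned (nv : vec -> vec) (sg : R) (T : face) (vi vj vk : vec) : vec :=
  let mT := sg *: face_normal T in
  let e1 := vj - vi in let e2 := vk - vi in
  let mi := sg *: nv vi in
  let p := mi - dot mi mT *: mT in
  let g11 := dot e1 e1 in let g12 := dot e1 e2 in let g22 := dot e2 e2 in
  let b1 := dot p e1 in let b2 := dot p e2 in
  let D := g11 * g22 - g12 ^+ 2 in
  let c1 := (b1 * g22 - b2 * g12) / D in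
  let c2 := (b2 * g11 - b1 * g12) / D in
  let w := mi - Num.max 0 c1 *: e1 - Num.max 0 c2 *: e2 in
  (enorm w)^-1 *: w.

Definition aligned_at (nv : vec -> vec) (sg : R) (T : face) (i : nat) : vec :=
  aligned nv sg T (vtx T i) (vtx T ((i + 1) %% 3)) (vtx T ((i + 2) %% 3)).

Definition height_l (sg : R) (T : face) (x : vec) : R :=
  dot (x - fv1 T) (sg *: face_normal T).

Definition lifted (nv : vec -> vec) (sg : R) (T : face) (x : vec) (i : nat) : vec :=
  let n := aligned_at nv sg T i in
  vtx T i + (height_l sg T x / dot n (sg *: face_normal T)) *: n.

Definition survives (nv : vec -> vec) (sg : R) (T : face) (x : vec) : Prop :=
  0 <= height_l sg T x /\
  in_tri (lifted nv sg T x 0) (lifted nv sg T x 1) (lifted nv sg T x 2) x.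

Definition proj_face (nv : vec -> vec) (sg : R) (T : face) (x s : vec) : Prop :=
  0 <= height_l sg T x /\
  exists a1 a2 a3 : R, [/\ 0 <= a1, 0 <= a2, 0 <= a3, a1 + a2 + a3 = 1 &
    x = bary a1 a2 a3 (lifted nv sg T x 0) (lifted nv sg T x 1) (lifted nv sg T x 2)] /\
  s = bary a1 a2 a3 (fv1 T) (fv2 T) (fv3 T).

Definition nearest (M : seq face) (x st : vec) : Prop :=
  on_mesh M st /\ forall q, on_mesh M q -> enorm (x - st) <= enorm (x - q).

Definition survival (M : seq face) (nv : vec -> vec) : Prop :=
  forall x st, nearest M x st ->
    exists T, [/\ T \in M, in_face T st & survives nv (sgn M x) T x].

(* s is (a possible value of) the dispersed projection of x; any ties in
   steps (1) and (6) may be broken arbitrarily *)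
Definition dispersed (M : seq face) (nv : vec -> vec) (x s : vec) : Prop :=
  let sg := sgn M x in
  exists st, [/\ nearest M x st,
    exists T, [/\ T \in M, in_face T st & proj_face nv sg T x s]
  & forall T s', T \in M -> in_face T st -> proj_face nv sg T x s' ->
      enorm (x - s) <= enorm (x - s')].

Definition signed_height (M : seq face) (x s : vec) : R :=
  if `[< inside M x >] then - enorm (x - s) else enorm (x - s).

Definition avec (nv : vec -> vec) (sg : R) (T : face) (i : nat) : vec :=
  let n := aligned_at nv sg T i in (dot n (sg *: face_normal T))^-1 *: n.

Definition exceptional (M : seq face) (nv : vec -> vec) (x : vec) : Prop :=
  exists T (sg : R) (i j : nat),
    [/\ T \in M, sg = 1 \/ sg = -1, (i < 3)%N, (j < 3)%N & i != j] /\
    exists u t : R, [/\ 0 <= u <= 1, 0 <= t &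
      x = (1 - u) *: vtx T i + u *: vtx T j
          + t *: ((1 - u) *: avec nv sg T i + u *: avec nv sg T j)].

End MeshDefs.

(* Main.v *)
Require Import Defs.
From HB Require Import structures.
From mathcomp Require Import all_boot all_order all_algebra.
From mathcomp Require Import all_classical all_reals all_analysis.
From mathcomp Require Import ring lra.
Set Implicit Arguments. Unset Strict Implicit.
Import Order.TTheory GRing.Theory Num.Theory.
Local Open Scope ring_scope.

Section H.
Variable R : realType.
Local Notation vec := 'rV[R]_3.
Local Notation face := (vec * vec * vec)%type.

Lemma ord3E (P : 'I_3 -> Prop) : P ord0 -> P (inord 1) -> P (inord 2) -> forall i, P i.
Proof.
move=> H0 H1 H2 [[|[|[|//]]] Hi].
- by have -> : Ordinal Hi = ord0 by apply/val_inj.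
- by have -> : Ordinal Hi = inord 1 by apply/val_inj; rewrite /= inordK.
- by have -> : Ordinal Hi = inord 2 by apply/val_inj; rewrite /= inordK.
Qed.

Lemma vec_ext (u v : vec) : Defs.coord u 0 = Defs.coord v 0 -> Defs.coord u 1 = Defs.coord v 1 ->
  Defs.coord u 2 = Defs.coord v 2 -> u = v.
Proof.
move=> H0 H1 H2; apply/rowP; apply: ord3E.
- by move: H0; rewrite /Defs.coord (_ : inord 0 = ord0) //; apply/val_inj; rewrite /= inordK.
- exact: H1.
- exact: H2.
Qed.

Lemma coordD (u v : vec) k : Defs.coord (u + v) k = Defs.coord u k + Defs.coord v k.
Proof. by rewrite /Defs.coord mxE. Qed.
Lemma coordB (u v : vec) k : Defs.coord (u - v) k = Defs.coord u k - Defs.coord v k.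
Proof. by rewrite /Defs.coord !mxE. Qed.
Lemma coordZ a (u : vec) k : Defs.coord (a *: u) k = a * Defs.coord u k.
Proof. by rewrite /Defs.coord mxE. Qed.
Lemma coord0 k : Defs.coord (0 : vec) k = 0.
Proof. by rewrite /Defs.coord mxE. Qed.

Lemma coord_vec3 (a b c : R) k : (k < 3)%N -> Defs.coord (vec3 a b c) k = nth 0 [:: a; b; c] k.
Proof. by move=> Hk; rewrite /Defs.coord /vec3 mxE inordK. Qed.

Definition coordE := (coordB, coordD, coordZ, coord0).

Lemma crossE (u v : vec) :
  [/\ Defs.coord (cross u v) 0 = Defs.coord u 1 * Defs.coord v 2 - Defs.coord u 2 * Defs.coord v 1,
      Defs.coord (cross u v) 1 = Defs.coord u 2 * Defs.coord v 0 - Defs.coord u 0 * Defs.coord v 2 &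
      Defs.coord (cross u v) 2 = Defs.coord u 0 * Defs.coord v 1 - Defs.coord u 1 * Defs.coord v 0].
Proof. by rewrite /cross !coord_vec3. Qed.

Lemma dotE (u v : vec) : dot u v = Defs.coord u 0 * Defs.coord v 0 + Defs.coord u 1 * Defs.coord v 1
   + Defs.coord u 2 * Defs.coord v 2.
Proof.
rewrite /dot !big_ord_recr big_ord0 /= add0r /Defs.coord.
by congr (_ * _ + _ * _ + _ * _); congr (_ _ _); apply/val_inj; rewrite /= inordK.
Qed.




Local Notation crd := Defs.coord.

Lemma aux1 (a b x1 x2 y1 y2 : R) : a*x1+b*y1 = 0 -> a*x2+b*y2 = 0 ->
  a*(x1*y2 - x2*y1) = 0 /\ b*(x1*y2 - x2*y1) = 0.
Proof.
move=> H1 H2; split.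
  have -> : a*(x1*y2 - x2*y1) = (a*x1+b*y1)*y2 - (a*x2+b*y2)*y1 by ring.
  by rewrite H1 H2; ring.
have -> : b*(x1*y2 - x2*y1) = (a*x2+b*y2)*x1 - (a*x1+b*y1)*x2 by ring.
by rewrite H1 H2; ring.
Qed.

Lemma lin_indep (e1 e2 : vec) a b : cross e1 e2 != 0 -> a *: e1 + b *: e2 = 0 ->
  a = 0 /\ b = 0.
Proof.
move=> Hc E.
have Hk k : a * crd e1 k + b * crd e2 k = 0.
  by have := congr1 (fun v => crd v k) E; rewrite /= !coordE.
have [C0 C1 C2] := crossE e1 e2.
have [A0 B0] := aux1 (Hk 1%N) (Hk 2%N).
have [A1 B1] := aux1 (Hk 2%N) (Hk 0%N).
have [A2 B2] := aux1 (Hk 0%N) (Hk 1%N).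
have Ha : a *: cross e1 e2 = 0 by apply: vec_ext; rewrite !coordE ?C0 ?C1 ?C2.
have Hb : b *: cross e1 e2 = 0 by apply: vec_ext; rewrite !coordE ?C0 ?C1 ?C2.
move/eqP: Ha; move/eqP: Hb; rewrite !scaler_eq0 (negbTE Hc) !orbF.
by move=> /eqP -> /eqP ->.
Qed.

Lemma coord_bary a1 a2 a3 (v1 v2 v3 : vec) k :
  crd (bary a1 a2 a3 v1 v2 v3) k = a1 * crd v1 k + a2 * crd v2 k + a3 * crd v3 k.
Proof. by rewrite /bary !coordE. Qed.

Lemma aux2 (a1 a2 a3 b1 b2 b3 x1 x2 x3 : R) : a1+a2+a3 = 1 -> b1+b2+b3 = 1 ->
  a1*x1+a2*x2+a3*x3 = b1*x1+b2*x2+b3*x3 -> (a2-b2)*(x2-x1)+(a3-b3)*(x3-x1) = 0.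
Proof.
move=> Ha Hb E.
have Ha' : a1 = 1 - a2 - a3 by lra.
have Hb' : b1 = 1 - b2 - b3 by lra.
rewrite Ha' Hb' in E.
have : (1-a2-a3)*x1+a2*x2+a3*x3 - ((1-b2-b3)*x1+b2*x2+b3*x3) = 0 by rewrite E subrr.
by move=> <-; ring.
Qed.

Lemma bary_uniq (v1 v2 v3 : vec) a1 a2 a3 b1 b2 b3 :
  cross (v2 - v1) (v3 - v1) != 0 -> a1 + a2 + a3 = 1 -> b1 + b2 + b3 = 1 ->
  bary a1 a2 a3 v1 v2 v3 = bary b1 b2 b3 v1 v2 v3 -> [/\ a1 = b1, a2 = b2 & a3 = b3].
Proof.
move=> Hc Ha Hb E.
have Hk k : (a2-b2)*(crd v2 k - crd v1 k)+(a3-b3)*(crd v3 k - crd v1 k) = 0.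
  apply: aux2 Ha Hb _.
  by have := congr1 (fun v => crd v k) E; rewrite /= !coord_bary.
have : (a2 - b2) *: (v2 - v1) + (a3 - b3) *: (v3 - v1) = 0.
  by apply: vec_ext; rewrite !coordE; apply: Hk.
move/(lin_indep Hc) => [H2 H3].
split; lra.
Qed.

Lemma cross_same (v : vec) : cross v v = 0.
Proof. have [C0 C1 C2] := crossE v v; apply: vec_ext; rewrite ?C0 ?C1 ?C2 !coordE; ring. Qed.
Lemma cross_0l (v : vec) : cross 0 v = 0.
Proof. have [C0 C1 C2] := crossE 0 v; apply: vec_ext; rewrite ?C0 ?C1 ?C2 !coordE; ring. Qed.
Lemma cross_0r (v : vec) : cross v 0 = 0.
Proof. have [C0 C1 C2] := crossE v 0; apply: vec_ext; rewrite ?C0 ?C1 ?C2 !coordE; ring. Qed.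

Lemma distinct3 (v1 v2 v3 : vec) : cross (v2 - v1) (v3 - v1) != 0 ->
  [/\ v1 != v2, v1 != v3 & v2 != v3].
Proof.
move=> Hc; split; apply/eqP => E; move: Hc; rewrite ?E ?subrr ?cross_0l ?cross_0r ?cross_same ?eqxx //.
Qed.

Lemma enorm_eq0 (u : vec) : enorm u = 0 -> u = 0.
Proof.
rewrite /enorm dotE => /eqP; rewrite sqrtr_eq0 => H.
have h0 := sqr_ge0 (crd u 0); have h1 := sqr_ge0 (crd u 1); have h2 := sqr_ge0 (crd u 2).
rewrite !expr2 in h0 h1 h2.
apply: vec_ext; rewrite coord0; nra.
Qed.

Lemma enorm_ge0 (u : vec) : 0 <= enorm u.
Proof. exact: sqrtr_ge0. Qed.

Lemma enormZ l (u : vec) : enorm (l *: u) = `|l| * enorm u.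
Proof.
rewrite /enorm (_ : dot _ _ = l ^+ 2 * dot u u); last by rewrite !dotE !coordE; ring.
by rewrite sqrtrM ?sqr_ge0 // sqrtr_sqr.
Qed.

Lemma ifZ (c : bool) (a : R) (v : vec) : (if c then a *: v else 0) = (if c then a else 0) *: v.
Proof. by case: c; rewrite ?scale0r ?scale0l. Qed.

Lemma no_small_com (v1 v2 v3 s : vec) (w : seq vec) a1 a2 a3 :
  cross (v2 - v1) (v3 - v1) != 0 ->
  (size (undup [seq p <- [:: v1; v2; v3] | p \in w]) < 3)%N ->
  conv_seq [seq p <- [:: v1; v2; v3] | p \in w] s ->
  0 < a1 -> 0 < a2 -> 0 < a3 -> a1 + a2 + a3 = 1 ->
  s = bary a1 a2 a3 v1 v2 v3 -> False.
Proof.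
move=> Hc Hsz [a [_ Hsum Hs]] p1 p2 p3 Ha Hs'.
have [D12 D13 D23] := distinct3 Hc.
have U : uniq [seq p <- [:: v1; v2; v3] | p \in w].
  by apply: filter_uniq; rewrite /= !inE negb_or D12 D13 D23.
rewrite undup_id // in Hsz Hsum Hs.
rewrite big_filter big_mkcond !big_cons big_nil /= in Hsum.
rewrite big_filter big_mkcond !big_cons big_nil /= !ifZ addr0 addrA in Hs.
rewrite addr0 addrA in Hsum.
have := bary_uniq Hc Ha Hsum (etrans (esym Hs') Hs).
have : ~~ (v1 \in w) || ~~ (v2 \in w) || ~~ (v3 \in w).
  by move: Hsz; rewrite /=; case: (v1 \in w); case: (v2 \in w); case: (v3 \in w).
move=> /orP [/orP [] | ] /negbTE -> [E1 E2 E3]; lra.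
Qed.

Lemma lifted_eq nv sg (T : face) x i :
  lifted nv sg T x i = vtx T i + height_l sg T x *: avec nv sg T i.
Proof. by rewrite /lifted /avec /= [in RHS]scalerA. Qed.

Lemma proj_decomp nv sg (T : face) x s : proj_face nv sg T x s ->
  exists a1 a2 a3, [/\ 0 <= a1, 0 <= a2, 0 <= a3, a1 + a2 + a3 = 1 &
   [/\ 0 <= height_l sg T x, s = bary a1 a2 a3 (fv1 T) (fv2 T) (fv3 T) &
    x = s + height_l sg T x *: bary a1 a2 a3 (avec nv sg T 0) (avec nv sg T 1) (avec nv sg T 2)]].
Proof.
move=> [Hl [a1 [a2 [a3 [[H1 H2 H3 Hs Hx] Hss]]]]].
exists a1, a2, a3; split => //; split => //.
rewrite {1}Hx !lifted_eq Hss /vtx /=.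
set l := height_l sg T x.
move: (avec nv sg T 0) (avec nv sg T 1) (avec nv sg T 2) => A0 A1 A2.
by apply: vec_ext; rewrite /bary !coordE; ring.
Qed.

Lemma pos_coeffs M nv sg (T : face) x a1 a2 a3 l :
  T \in M -> (sg = 1 \/ sg = -1) -> ~ exceptional M nv x ->
  0 <= a1 -> 0 <= a2 -> 0 <= a3 -> a1 + a2 + a3 = 1 -> 0 <= l ->
  x = bary a1 a2 a3 (fv1 T) (fv2 T) (fv3 T) +
      l *: bary a1 a2 a3 (avec nv sg T 0) (avec nv sg T 1) (avec nv sg T 2) ->
  [/\ 0 < a1, 0 < a2 & 0 < a3].
Proof.
move=> HT Hsg Hex H1 H2 H3 Ha Hl Hx.
have P (i j : nat) u : (i < 3)%N -> (j < 3)%N -> i != j -> 0 <= u <= 1 ->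
    x = (1 - u) *: vtx T i + u *: vtx T j
      + l *: ((1 - u) *: avec nv sg T i + u *: avec nv sg T j) -> False.
  move=> Hi Hj Hij Hu E; apply: Hex; exists T, sg, i, j; split => //.
  by exists u, l; split.
split; rewrite lt_neqAle ?H1 ?H2 ?H3 andbT; apply/negP => /eqP E.
- apply: (P 1%N 2%N a3) => //; first by apply/andP; split; lra.
  have Hx2 : a2 = 1 - a3 by lra.
  rewrite Hx -E Hx2 /vtx /=; move: (avec nv sg T 0) (avec nv sg T 1) (avec nv sg T 2) => A0 A1 A2; apply: vec_ext; rewrite /bary !coordE; ring.
- apply: (P 0%N 2%N a3) => //; first by apply/andP; split; lra.
  have Hx2 : a1 = 1 - a3 by lra.
  rewrite Hx -E Hx2 /vtx /=; move: (avec nv sg T 0) (avec nv sg T 1) (avec nv sg T 2) => A0 A1 A2; apply: vec_ext; rewrite /bary !coordE; ring.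
- apply: (P 0%N 1%N a2) => //; first by apply/andP; split; lra.
  have Hx2 : a1 = 1 - a2 by lra.
  rewrite Hx -E Hx2 /vtx /=; move: (avec nv sg T 0) (avec nv sg T 1) (avec nv sg T 2) => A0 A1 A2; apply: vec_ext; rewrite /bary !coordE; ring.
Qed.

Lemma face_unique M (T1 T2 : face) s a1 a2 a3 b1 b2 b3 :
  no_zero_area_face M -> no_self_intersection M -> T1 \in M -> T2 \in M ->
  0 < a1 -> 0 < a2 -> 0 < a3 -> a1 + a2 + a3 = 1 ->
  s = bary a1 a2 a3 (fv1 T1) (fv2 T1) (fv3 T1) ->
  0 <= b1 -> 0 <= b2 -> 0 <= b3 -> b1 + b2 + b3 = 1 ->
  s = bary b1 b2 b3 (fv1 T2) (fv2 T2) (fv3 T2) -> T1 = T2.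
Proof.
move=> Hnz Hnsi HT1 HT2 p1 p2 p3 Ha Hs q1 q2 q3 Hb Hs2.
case: (T1 =P T2) => // Hne; exfalso.
have Hi : (index T1 M < size M)%N by rewrite index_mem.
have Hj : (index T2 M < size M)%N by rewrite index_mem.
have Hij : index T1 M != index T2 M.
  apply/eqP => E; apply: Hne.
  by rewrite -(nth_index face0 HT1) -(nth_index face0 HT2) E.
move: (Hnsi _ _ Hi Hj Hij); rewrite /= (nth_index face0 HT1) (nth_index face0 HT2).
move=> [Hsz Hiff].
have Hc : conv_seq [seq p <- verts T1 | p \in verts T2] s.
  apply/Hiff; split.
  - exists a1, a2, a3; split => //; lra.
  - by exists b1, b2, b3.
exact: (no_small_com (Hnz _ HT1) Hsz Hc p1 p2 p3 Ha Hs).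
Qed.
End H.

Theorem lemma2 (R : realType) (M : seq ('rV[R]_3 * 'rV[R]_3 * 'rV[R]_3))
    (nv : 'rV[R]_3 -> 'rV[R]_3) :
  no_zero_area_face M -> closed_mesh M -> no_self_intersection M -> outward M ->
  vnormals_ok M nv -> survival M nv ->
  forall x1 x2 s : 'rV[R]_3,
    ~ exceptional M nv x1 -> ~ exceptional M nv x2 ->
    dispersed M nv x1 s -> dispersed M nv x2 s ->
    signed_height M x1 s = signed_height M x2 s ->
    x1 = x2.
Proof.
move=> Hnz _ Hnsi _ _ _ x1 x2 s Hex1 Hex2 D1 D2 Hh.
move: D1 => [st1 [_ [T1 [HT1 _ Hp1]] _]].
move: D2 => [st2 [_ [T2 [HT2 _ Hp2]] _]].
have [//|[Hsg He]] : x1 = x2 \/ (sgn M x1 = sgn M x2 /\ enorm (x1 - s) = enorm (x2 - s)).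
  move: Hh; rewrite /signed_height /sgn.
  have g1 := enorm_ge0 (x1 - s); have g2 := enorm_ge0 (x2 - s).
  case: `[< inside M x1 >]; case: `[< inside M x2 >] => H.
  - by right; split => //; apply: oppr_inj.
  - left; have E1 : enorm (x1 - s) = 0 by lra.
    have E2 : enorm (x2 - s) = 0 by lra.
    by rewrite (subr0_eq (enorm_eq0 E1)) (subr0_eq (enorm_eq0 E2)).
  - left; have E1 : enorm (x1 - s) = 0 by lra.
    have E2 : enorm (x2 - s) = 0 by lra.
    by rewrite (subr0_eq (enorm_eq0 E1)) (subr0_eq (enorm_eq0 E2)).
  - by right.
have Hsg1 : sgn M x1 = 1 \/ sgn M x1 = -1 by rewrite /sgn; case: `[< _ >]; [right|left].
have [a1 [a2 [a3 [H1 H2 H3 Ha [Hl1 Hs1 Hx1]]]]] := proj_decomp Hp1.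
have [b1 [b2 [b3 [G1 G2 G3 Hb [Hl2 Hs2 Hx2]]]]] := proj_decomp Hp2.
rewrite -Hsg in Hl2 Hx2.
have Hx1' := Hx1; rewrite {1}Hs1 in Hx1'.
have [p1 p2 p3] := pos_coeffs HT1 Hsg1 Hex1 H1 H2 H3 Ha Hl1 Hx1'.
have ET := face_unique Hnz Hnsi HT1 HT2 p1 p2 p3 Ha Hs1 G1 G2 G3 Hb Hs2.
subst T2.
have [E1 E2 E3] := bary_uniq (Hnz _ HT1) Ha Hb (etrans (esym Hs1) Hs2).
subst b1 b2 b3.
set sg := sgn M x1 in Hx1 Hx2 Hl1 Hl2.
set W := bary a1 a2 a3 _ _ _ in Hx1 Hx2.
set l1 := height_l sg T1 x1 in Hx1 Hl1.
set l2 := height_l sg T1 x2 in Hx2 Hl2.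
have D1 : x1 - s = l1 *: W by rewrite {1}Hx1 addrC addKr.
have D2 : x2 - s = l2 *: W by rewrite {1}Hx2 addrC addKr.
rewrite D1 D2 !enormZ !ger0_norm // in He.
have [W0|W0] := eqVneq (enorm W) 0.
  by rewrite Hx1 Hx2 (enorm_eq0 W0) !scaler0.
by rewrite Hx1 Hx2 (mulIf W0 He).
Qed.
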